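(* Let $(N,\mathcal{I})$ be a set system, $f:2^N\to\mathbb{R}_{\ge0}$ a normalized monotone submodular function with multilinear extension $F$, $\alpha\in(0,1]$, $\ell$ a positive integer, and fix $T\in\mathcal{I}$. Let $S_1,\dots,S_\ell$ be random sets in $\mathcal{I}$, let $x_0=0$ and $x_i=x_{i-1}+\frac1\ell\mathbf{1}_{S_i}$. For each $i$ define, for $A,B\subseteq N$, $g_i(A)=F(x_{i-1}+\frac1\ell\mathbf{1}_A)-F(x_{i-1})$ and $g_i(A\uplus B)=F(x_{i-1}+\frac1\ell(\mathbf{1}_A+\mathbf{1}_B))-F(x_{i-1})$. Suppose that for each $i$, conditioned on $S_1,\dots,S_{i-1}$, $\mathbb{E}[g_i(S_i)]\ge\alpha\,\mathbb{E}[g_i(S_i\uplus T)-g_i(S_i)]$. Then $x_\ell$ is a convex combination of indicator vectors of $\ell$ sets of $\mathcal{I}$, and $\mathbb{E}[F(x_\ell)]\ge\bigl(1-(1+\alpha/\ell)^{-\ell}\bigr)f(T)\ge(1-2/\ell)(1-e^{-\alpha})f(T)$; in particular, for $\ell\ge2/\varepsilon$, $\mathbb{E}[F(x_\ell)]\ge(1-\varepsilon)(1-e^{-\alpha})f(T)$.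
   Context: $f$ normalized: $f(\emptyset)=0$; monotone: $f(A)\le f(B)$ for $A\subseteq B$; submodular: $f(A)+f(B)\ge f(A\cup B)+f(A\cap B)$. The multilinear extension is $F(x)=\mathbb{E}[f(R)]$ for $x\in\mathbb{R}_{\ge0}^N$, where $R$ contains each $e$ independently with probability $\min\{x_e,1\}$; $\mathbf{1}_A$ is the indicator vector of $A$. *)

(* Defs.v *)
From Stdlib Require Import Reals.
From HB Require Import structures.
From mathcomp Require Import all_boot.

Set Implicit Arguments.
Unset Strict Implicit.
Unset Printing Implicit Defensive.

Local Open Scope R_scope.

Notation "\rsum_ ( i : T ) F" := (\big[Rplus/R0]_(i : T) F)
  (at level 41, F at level 41, i, T at level 50).
Notation "\rsum_ ( i < n ) F" := (\big[Rplus/R0]_(i < n) F)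
  (at level 41, F at level 41, i, n at level 50).
Notation "\rprod_ ( i : T ) F" := (\big[Rmult/R1]_(i : T) F)
  (at level 36, F at level 36, i, T at level 50).

Section Defs.
Variable N : finType.

Definition normalized (f : {set N} -> R) : Prop := f set0 = 0.
Definition nonneg_setfun (f : {set N} -> R) : Prop := forall A, 0 <= f A.
Definition monotone (f : {set N} -> R) : Prop :=
  forall A B : {set N}, A \subset B -> f A <= f B.
Definition submodular (f : {set N} -> R) : Prop :=
  forall A B : {set N}, f A + f B >= f (A :|: B) + f (A :&: B).

Definition indic (A : {set N}) : N -> R := fun e => if e \in A then 1 else 0.

(* multilinear extension: F(x) = E[f(R)], R contains e independently
   with probability min(x_e, 1) *)
Definition multilinear (f : {set N} -> R) (x : N -> R) : R :=
  \rsum_(A : {set N})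
    (f A * \rprod_(e : N)
       (if e \in A then Rmin (x e) 1 else 1 - Rmin (x e) 1)).

(* the random process is given by a (finite) probability distribution p
   on outcomes s = (S_1,...,S_l), encoded as s : {ffun 'I_l -> {set N}}
   (S_{j+1} = s j).  Expectation of X : *)
Definition expect (l : nat) (p : {ffun 'I_l -> {set N}} -> R)
  (X : {ffun 'I_l -> {set N}} -> R) : R :=
  \rsum_(s : {ffun 'I_l -> {set N}}) (p s * X s).

(* x_i = sum_{j < i} (1/l) 1_{S_{j+1}}, so x_0 = 0, x_i = x_{i-1} + 1/l 1_{S_i} *)
Definition xs (l : nat) (s : {ffun 'I_l -> {set N}}) (i : nat) : N -> R :=
  fun e => \big[Rplus/R0]_(j < l | (j < i)%N) (/ INR l * indic (s j) e).

End Defs.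

(* Main.v *)
Require Import Defs.
From Stdlib Require Import Reals Lra Psatz.
From HB Require Import structures.
From mathcomp Require Import all_boot.
Local Open Scope R_scope.
Set Implicit Arguments.
Unset Strict Implicit.

HB.instance Definition _ := Monoid.isComLaw.Build R R0 Rplus (fun a b c => esym (Rplus_assoc a b c)) Rplus_comm Rplus_0_l.
HB.instance Definition _ := Monoid.isComLaw.Build R R1 Rmult (fun a b c => esym (Rmult_assoc a b c)) Rmult_comm Rmult_1_l.
HB.instance Definition _ := Monoid.isMulLaw.Build R R0 Rmult Rmult_0_l Rmult_0_r.
HB.instance Definition _ := Monoid.isAddLaw.Build R Rmult Rplus Rmult_plus_distr_r Rmult_plus_distr_l.

Section ML.
Variable N : finType.
Implicit Types (q : N -> R) (h : {set N} -> R).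

Definition P q (A : {set N}) : R :=
  \rprod_(e : N) (if e \in A then q e else 1 - q e).
Definition G h q : R := \rsum_(A : {set N}) (h A * P q A).
Definition upd q (e : N) (c : R) : N -> R := fun i => if i == e then c else q i.
Definition unit01 q := forall e, 0 <= q e <= 1.

Lemma multilinearE f x : multilinear f x = G f (fun e => Rmin (x e) 1).
Proof. reflexivity. Qed.

Lemma G_ext h q q' : (forall e, q e = q' e) -> G h q = G h q'.
Proof.
move=> H; apply: eq_bigr => A _; congr (_ * _); apply: eq_bigr => e _.
by rewrite H.
Qed.

Lemma G_exth h h' q : (forall A, h A = h' A) -> G h q = G h' q.
Proof. by move=> H; apply: eq_bigr => A _; rewrite H. Qed.

Lemma P_ge0 q A : unit01 q -> 0 <= P q A.
Proof.
move=> H; apply: (big_ind (fun x => 0 <= x)); [lra| move=> *; nra|].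
move=> e _; case: (e \in A); have := H e; lra.
Qed.

Lemma P_split q e A : P q A = (if e \in A then q e else 1 - q e) *
  \big[Rmult/R1]_(i : N | i != e) (if i \in A then q i else 1 - q i).
Proof. by rewrite /P (bigD1 e). Qed.

Lemma P_upd q e c A :
  P (upd q e c) A = c * P (upd q e 1) A + (1 - c) * P (upd q e 0) A.
Proof.
rewrite !(P_split _ e) /upd eqxx.
have E : forall c', \big[Rmult/R1]_(i : N | i != e)
   (if i \in A then (if i == e then c' else q i) else 1 - (if i == e then c' else q i))
   = \big[Rmult/R1]_(i : N | i != e) (if i \in A then q i else 1 - q i).
  by move=> c'; apply: eq_bigr => i /negbTE ->.
rewrite !E; case: (e \in A); ring.
Qed.

Lemma sum_split (I : finType) (F1 F2 : I -> R) :
  \rsum_(i : I) (F1 i + F2 i) = \rsum_(i : I) F1 i + \rsum_(i : I) F2 i.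
Proof. by rewrite big_split. Qed.

Lemma sum_scale (I : finType) c (F1 : I -> R) :
  \rsum_(i : I) (c * F1 i) = c * \rsum_(i : I) F1 i.
Proof. by rewrite big_distrr. Qed.

Lemma sum_opp (I : finType) (F1 : I -> R) :
  \rsum_(i : I) (- F1 i) = - \rsum_(i : I) F1 i.
Proof. by rewrite (big_morph Ropp Ropp_plus_distr Ropp_0). Qed.

Lemma sum_le (I : finType) (F1 F2 : I -> R) :
  (forall i, F1 i <= F2 i) -> \rsum_(i : I) F1 i <= \rsum_(i : I) F2 i.
Proof.
move=> H; apply: (big_ind2 (fun x y => x <= y)); [lra| move=> *; lra|].
by move=> i _; apply: H.
Qed.

Lemma sum_ge0 (I : finType) (F1 : I -> R) :
  (forall i, 0 <= F1 i) -> 0 <= \rsum_(i : I) F1 i.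
Proof.
move=> H; apply: (big_ind (fun x => 0 <= x)); [lra| move=> *; lra|].
by move=> i _; apply: H.
Qed.

Lemma G_upd h q e c :
  G h (upd q e c) = c * G h (upd q e 1) + (1 - c) * G h (upd q e 0).
Proof.
rewrite /G -!sum_scale -sum_split; apply: eq_bigr => A _; rewrite P_upd; ring.
Qed.


Lemma P_upd1_out q e (A : {set N}) : e \notin A -> P (upd q e 1) A = 0.
Proof. by move=> /negbTE H; rewrite (P_split _ e) H /upd eqxx; ring. Qed.

Lemma P_upd0_in q e (A : {set N}) : e \in A -> P (upd q e 0) A = 0.
Proof. by move=> H; rewrite (P_split _ e) H /upd eqxx; ring. Qed.

Lemma P_shift q e (A : {set N}) : e \notin A -> P (upd q e 1) (e |: A) = P (upd q e 0) A.
Proof.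
move=> /negbTE H; rewrite !(P_split _ e) setU11 H /upd eqxx.
congr (_ * _); first ring.
by apply: eq_bigr => i /negbTE ie; rewrite in_setU1 ie.
Qed.

Lemma pairG (k : {set N} -> R) q e :
  \rsum_(A : {set N}) (k A * P (upd q e 1) A) =
  \rsum_(A : {set N}) (k (e |: A) * P (upd q e 0) A).
Proof.
rewrite (bigID (fun A : {set N} => e \in A)) /= [X in _ + X]big1; last first.
  by move=> A HA; rewrite P_upd1_out // Rmult_0_r.
rewrite [RHS](bigID (fun A : {set N} => e \in A)) /=.
rewrite [X in _ = X + _]big1; last first.
  by move=> A HA; rewrite P_upd0_in // Rmult_0_r.
rewrite Rplus_0_r Rplus_0_l.
rewrite (reindex_onto (fun A : {set N} => e |: A) (fun A : {set N} => A :\ e)); last first.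
  by move=> A HA; rewrite setD1K.
transitivity (\big[Rplus/R0]_(A : {set N} | e \notin A) (k (e |: A) * P (upd q e 1) (e |: A))).
  apply: eq_bigl => A; rewrite setU11 /=; case: (boolP (e \in A)) => H /=.
    apply/negbTE/negP => /eqP HH; have : e \in (e |: A) :\ e by rewrite HH.
    by rewrite in_setD1 eqxx.
  by rewrite setU1K // eqxx.
by apply: eq_bigr => A HA; rewrite P_shift.
Qed.

Definition Dlt h (e : N) : {set N} -> R := fun A => h (e |: A) - h A.

Lemma G_marg h q e :
  G h (upd q e 1) - G h (upd q e 0) = G (Dlt h e) (upd q e 0).
Proof.
rewrite /G pairG /Dlt /Rminus -sum_opp -sum_split; apply: eq_bigr => A _; ring.
Qed.

Lemma G_opp h q : G (fun A => - h A) q = - G h q.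
Proof. by rewrite /G -sum_opp; apply: eq_bigr => A _; ring. Qed.


Lemma unit01_upd q e c : unit01 q -> 0 <= c <= 1 -> unit01 (upd q e c).
Proof. by move=> H Hc i; rewrite /upd; case: (i == e). Qed.

Lemma G_mono h : (forall A e, h A <= h (e |: A)) ->
  forall n (U : {set N}) q q', (#|U| <= n)%N -> unit01 q -> unit01 q' ->
  (forall e, q e <= q' e) -> (forall e, e \notin U -> q e = q' e) ->
  G h q <= G h q'.
Proof.
move=> Hh; elim=> [|n IH] U q q' HU H1 H2 Hle Hout.
  case: (set_0Vmem U) => [E|[e He]].
    by rewrite (@G_ext h q q') ?E; [lra| move=> e; apply: Hout; rewrite E in_set0].
  by move: HU; rewrite (cardsD1 e) He.
case: (set_0Vmem U) => [E|[e He]].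
  by rewrite (@G_ext h q q') ?E; [lra| move=> e; apply: Hout; rewrite E in_set0].
have Hr : unit01 (upd q' e (q e)) by apply: unit01_upd.
apply: (Rle_trans _ (G h (upd q' e (q e)))).
  apply: (IH (U :\ e)) => //.
  - by move: HU; rewrite (cardsD1 e) He.
  - by move=> i; rewrite /upd; case: eqP => [->|_]; [lra|apply: Hle].
  - move=> i; rewrite /upd in_setD1; case: eqP => [->|ne] //= Hi; exact: Hout.
have E : G h q' = G h (upd q' e (q' e)).
  by apply: G_ext => i; rewrite /upd; case: eqP => [->|].
rewrite E (G_upd h q' e (q e)) (G_upd h q' e (q' e)).
have HD : 0 <= G h (upd q' e 1) - G h (upd q' e 0).
  rewrite G_marg; apply: sum_ge0 => A; apply: Rmult_le_pos.
    by have := Hh A e; rewrite /Dlt; lra.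
  by apply: P_ge0; apply: unit01_upd => //; lra.
have K : 0 <= (q' e - q e) * (G h (upd q' e 1) - G h (upd q' e 0)).
  by apply: Rmult_le_pos => //; have := Hle e; lra.
lra.
Qed.

Definition indic' (T : {set N}) : N -> R := fun i => if i \in T then 1 else 0.

Lemma G_indic h T : G h (indic' T) = h T.
Proof.
rewrite /G (bigD1 T) //= big1.
  rewrite /P big1; first ring.
  by move=> i _; rewrite /indic'; case: (i \in T); ring.
move=> A HA.
case: (pickP (fun i => (i \in A) != (i \in T))) => [i Hi|H].
  rewrite (P_split _ i) /indic'; move: Hi.
  by case: (i \in A); case: (i \in T) => //= _; ring.
case/eqP: HA; apply/setP => i; by move: (H i) => /negbFE/eqP.
Qed.

Variable f : {set N} -> R.
Hypothesis fmono : monotone f.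
Hypothesis fsub : submodular f.

Lemma Dlt_anti e {A B : {set N}} : A \subset B -> Dlt f e B <= Dlt f e A.
Proof.
move=> AB; rewrite /Dlt.
have H := fsub (e |: A) B.
have E : e |: A :|: B = e |: B by rewrite -setUA (setUidPr AB).
have M : f A <= f ((e |: A) :&: B).
  by apply: fmono; rewrite subsetI subsetUr AB.
rewrite E in H; lra.
Qed.

Definition plusv q (U : {set N}) eps : N -> R :=
  fun i => if i \in U then q i + eps * (1 - q i) else q i.
Definition topv q (U : {set N}) : N -> R := fun i => if i \in U then 1 else q i.

Lemma G_concave eps : 0 <= eps <= 1 ->
  forall n (U : {set N}) q, (#|U| <= n)%N -> unit01 q ->
  (1 - eps) * G f q + eps * G f (topv q U) <= G f (plusv q U eps).
Proof.
move=> He; elim=> [|n IH] U q HU Hq.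
  case: (set_0Vmem U) => [E|[e HeU]].
    rewrite (@G_ext f (topv q U) (q)); last by move=> i; rewrite /topv E in_set0.
    rewrite (@G_ext f (plusv q U eps) (q)); last by move=> i; rewrite /plusv E in_set0.
    lra.
  by move: HU; rewrite (cardsD1 e) HeU.
case: (set_0Vmem U) => [E|[e HeU]].
  rewrite (@G_ext f (topv q U) (q)); last by move=> i; rewrite /topv E in_set0.
  rewrite (@G_ext f (plusv q U eps) (q)); last by move=> i; rewrite /plusv E in_set0.
  lra.
set U' := U :\ e.
have HU' : (#|U'| <= n)%N by move: HU; rewrite (cardsD1 e) HeU.
have eU' : e \notin U' by rewrite in_setD1 eqxx.
have Hqe := Hq e.
set c := q e + eps * (1 - q e).
have Hc : 0 <= c <= 1.
  have K1 : 0 <= eps * (1 - q e) by apply: Rmult_le_pos; lra.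
  have K2 : 0 <= (1 - eps) * (1 - q e) by apply: Rmult_le_pos; lra.
  rewrite /c; lra.
have H1 : G f (plusv q U eps) = c * G f (plusv (upd q e 1) U' eps)
                             + (1 - c) * G f (plusv (upd q e 0) U' eps).
  rewrite (@G_ext f (plusv q U eps) (upd (plusv q U' eps) e c)); last first.
    move=> i; rewrite /plusv /upd /U' in_setD1; case: eqP => [->|ne] //=.
    by rewrite HeU.
  rewrite G_upd; congr (_ * _ + _ * _); apply: G_ext => i;
  rewrite /plusv /upd; case: eqP => [->|] //=; by rewrite (negbTE eU').
have H3 : G f q = q e * G f (upd q e 1) + (1 - q e) * G f (upd q e 0).
  rewrite -G_upd; apply: G_ext => i; rewrite /upd; by case: eqP => [->|].
have H4 : G f (topv q U) = G f (topv (upd q e 1) U').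
  apply: G_ext => i; rewrite /topv /upd /U' in_setD1.
  by case: eqP => [->|ne] //=; rewrite HeU.
have H5 := G_marg f q e.
have H6 : G f (topv (upd q e 1) U') - G f (topv (upd q e 0) U') =
          G (Dlt f e) (upd (topv q U') e 0).
  rewrite -G_marg; congr (_ - _); apply: G_ext => i; rewrite /topv /upd;
  case: eqP => [->|] //=; by rewrite (negbTE eU').
have H7 : G (Dlt f e) (upd (topv q U') e 0) <= G (Dlt f e) (upd q e 0).
  have HH : - G (Dlt f e) (upd q e 0) <= - G (Dlt f e) (upd (topv q U') e 0).
    rewrite -!G_opp; apply: (@G_mono (fun A => - Dlt f e A) _ n U') => //.
    - by move=> A x; have := Dlt_anti e (subsetUr [set x] A); lra.
    - by apply: unit01_upd => //; lra.
    - apply: unit01_upd; last lra.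
      by move=> i; rewrite /topv; case: (i \in U') => //; lra.
    - move=> i; rewrite /upd /topv; case: (i == e); first lra.
      by case: (i \in U'); have := Hq i; lra.
    - by move=> i Hi; rewrite /upd /topv (negbTE Hi).
  lra.
have I1 := IH U' (upd q e 1) HU' (@unit01_upd q e 1 Hq (conj Rle_0_1 (Rle_refl 1))).
have I0 := IH U' (upd q e 0) HU' (@unit01_upd q e 0 Hq (conj (Rle_refl 0) Rle_0_1)).
rewrite H1 H3 H4.
set G1 := G f (upd q e 1) in H3 H5 I1 *.
set G0 := G f (upd q e 0) in H3 H5 I0 *.
set T1 := G f (topv (upd q e 1) U') in H6 I1 *.
set T0 := G f (topv (upd q e 0) U') in H6 I0 *.
set P1 := G f (plusv (upd q e 1) U' eps) in I1 *.
set P0 := G f (plusv (upd q e 0) U' eps) in I0 *.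
have D : 0 <= G1 - G0 - T1 + T0 by lra.
have K1 : 0 <= c * (P1 - ((1 - eps) * G1 + eps * T1)) by apply: Rmult_le_pos; lra.
have K0 : 0 <= (1 - c) * (P0 - ((1 - eps) * G0 + eps * T0)) by apply: Rmult_le_pos; lra.
have K : 0 <= eps * (1 - eps) * (1 - q e) * (G1 - G0 - T1 + T0).
  repeat apply: Rmult_le_pos; lra.
have Id : c * P1 + (1 - c) * P0 - ((1 - eps) * (q e * G1 + (1 - q e) * G0) + eps * T1)
  = c * (P1 - ((1 - eps) * G1 + eps * T1)) + (1 - c) * (P0 - ((1 - eps) * G0 + eps * T0))
    + eps * (1 - eps) * (1 - q e) * (G1 - G0 - T1 + T0).
  rewrite /c; ring.
lra.
Qed.

End ML.


Lemma exp_pow_n x n : exp x ^ n = exp (x * INR n).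
Proof.
elim: n => [|n IH]; first by rewrite /= Rmult_0_r exp_0.
change (exp x ^ n.+1) with (exp x * exp x ^ n); rewrite IH S_INR -exp_plus; f_equal; ring.
Qed.

Lemma bernoulli c n : 0 <= c <= 1 -> 1 - INR n * c <= (1 - c) ^ n.
Proof.
move=> Hc; elim: n => [|n IH]; first by rewrite /=; lra.
change ((1 - c) ^ n.+1) with ((1 - c) * (1 - c) ^ n); rewrite S_INR.
have H0 : 0 <= (1 - c) ^ n by apply: pow_le; lra.
have K : 0 <= INR n * c * c by have := pos_INR n; nra.
nra.
Qed.

Lemma anal a l : 0 < a <= 1 -> (0 < l)%N ->
  (1 - 2 / INR l) * (1 - exp (- a)) <= 1 - / (1 + a / INR l) ^ l.
Proof.
move=> Ha Hl.
have Hl0 : 0 < INR l by apply: lt_0_INR; apply/ltP.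
have HE1 : exp (- a) <= 1.
  have := exp_increasing (- a) 0; rewrite exp_0; lra.
have HE0 : 0 < exp (- a) := exp_pos _.
set t := a / INR l.
have Ht0 : 0 < t by rewrite /t; apply: Rdiv_lt_0_compat; lra.
have Hp1 : 1 <= (1 + t) ^ l by apply: pow_R1_Rle; lra.
have Hpp : 0 < (1 + t) ^ l by lra.
have Hinv : / (1 + t) ^ l <= 1.
  apply: (Rle_trans _ (/ 1)); [apply: Rinv_le_contravar; lra| rewrite Rinv_1; lra].
case: (leqP l 2) => Hl2.
  have : INR l <= 2 by change 2 with (INR 2); apply: le_INR; apply/leP.
  move=> H2.
  have : 1 - 2 / INR l <= 0.
    have : 1 <= 2 / INR l.
      apply: (Rmult_le_reg_l (INR l)) => //; field_simplify; lra.
    lra.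
  have : 0 <= 1 - / (1 + t) ^ l by lra.
  nra.
have H3 : 3 <= INR l.
  have : INR 3 <= INR l by apply: le_INR; apply/leP.
  by rewrite (_ : INR 3 = 3) // /=; ring.
have Ht3 : t <= 1 / 3.
  rewrite /t; apply: (Rmult_le_reg_l (INR l)) => //; field_simplify; lra.
have Hlt : t * INR l = a by rewrite /t; field; lra.
have K1 : / (1 + t) <= exp (- t) / (1 - t * t).
  have Hx := exp_ineq1_le (- t).
  have Hp : 0 < 1 - t * t by nra.
  apply: (Rmult_le_reg_l ((1 + t) * (1 - t * t))); first nra.
  have -> : (1 + t) * (1 - t * t) * / (1 + t) = 1 - t * t by field; lra.
  have -> : (1 + t) * (1 - t * t) * (exp (- t) / (1 - t * t)) = (1 + t) * exp (- t)
    by field; lra.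
  have : 0 <= (1 + t) * (exp (- t) - (1 - t)) by apply: Rmult_le_pos; lra.
  lra.
have K2 : / (1 + t) ^ l <= exp (- a) / (1 - t * t) ^ l.
  rewrite -pow_inv.
  have -> : exp (- a) / (1 - t * t) ^ l = (exp (- t) / (1 - t * t)) ^ l.
    rewrite /Rdiv Rpow_mult_distr pow_inv exp_pow_n; congr (exp _ * _).
    rewrite -Hlt; ring.
  apply: pow_incr; split; last done.
  by apply: Rlt_le; apply: Rinv_0_lt_compat; lra.
set c := a * a / INR l.
have Hc : c <= 1 / 3.
  rewrite /c; apply: (Rmult_le_reg_l (INR l)) => //; field_simplify; nra.
have Hc0 : 0 <= c by rewrite /c; apply: Rmult_le_pos; [nra| apply: Rlt_le; apply: Rinv_0_lt_compat; lra].
have Hct : INR l * (t * t) = c by rewrite /c /t; field; lra.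
have B : 1 - c <= (1 - t * t) ^ l.
  rewrite -Hct; apply: bernoulli; split; nra.
set E := exp (- a) in HE1 HE0 K2 *.
have K3 : E / (1 - t * t) ^ l <= E / (1 - c).
  apply: Rmult_le_compat_l; first lra.
  apply: Rinv_le_contravar; lra.
have HaE : a * E <= 1 - E.
  have Hx := exp_ineq1_le a.
  have HEa : E * exp a = 1 by rewrite /E -exp_plus (_ : - a + a = 0) ?exp_0 //; ring.
  have : E * (1 + a) <= E * exp a by apply: Rmult_le_compat_l; lra.
  lra.
have Hgoal : (1 - 2 / INR l) * (1 - E) <= 1 - E / (1 - c).
  have Hc1 : 0 < 1 - c by lra.
  apply: (Rmult_le_reg_l (1 - c)) => //.
  have -> : (1 - c) * (1 - E / (1 - c)) = 1 - c - E by field; lra.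
  have Id : 1 - c - E - (1 - c) * ((1 - 2 / INR l) * (1 - E))
          = / INR l * (2 * (1 - E) * (1 - c) - a * a * E).
    by rewrite /c; field; lra.
  have P1 : 0 <= 2 * (1 - E) * (1 - c) - a * a * E.
    have : 0 <= a * E * (1 - a) by apply: Rmult_le_pos; [apply: Rmult_le_pos|]; lra.
    have : 0 <= (1 - E) * (1 / 3 - c) by apply: Rmult_le_pos; lra.
    lra.
  have : 0 <= / INR l * (2 * (1 - E) * (1 - c) - a * a * E).
    by apply: Rmult_le_pos => //; apply: Rlt_le; apply: Rinv_0_lt_compat.
  lra.
lra.
Qed.


Set Implicit Arguments.
Unset Strict Implicit.

Section Main.
Variable N : finType.

Lemma multilinear_ext (f : {set N} -> R) x y :
  (forall e, x e = y e) -> multilinear f x = multilinear f y.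
Proof. by move=> H; rewrite !multilinearE; apply: G_ext => e; rewrite H. Qed.

Lemma monoG (f : {set N} -> R) : monotone f -> forall A e, f A <= f (e |: A).
Proof. by move=> Hm A e; apply: Hm; apply: subsetUr. Qed.

Lemma step_ineq (f : {set N} -> R) (y : N -> R) eps T :
  monotone f -> submodular f -> unit01 y -> 0 <= eps <= 1 ->
  (1 - eps) * multilinear f y + eps * f T <=
  multilinear f (fun e => y e + eps * indic T e).
Proof.
move=> Hm Hs Hy He.
rewrite !multilinearE.
rewrite (@G_ext _ f (fun e => Rmin (y e) 1) y); last first.
  by move=> e; rewrite Rmin_left //; have := Hy e; lra.
have U1 : unit01 (fun e => Rmin (y e + eps * indic T e) 1).
  move=> e; split; last exact: Rmin_r.
  apply: Rmin_glb; last lra.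
  have := Hy e; rewrite /indic; case: (e \in T); nra.
have U2 : unit01 (plusv y T eps).
  move=> e; rewrite /plusv; have := Hy e; case: (e \in T) => // H.
  have : 0 <= eps * (1 - y e) <= 1 - y e by split; nra.
  lra.
have M1 : G f (plusv y T eps) <= G f (fun e => Rmin (y e + eps * indic T e) 1).
  apply: (@G_mono _ f (@monoG f Hm) #|[set: N]| [set: N]) => //.
    move=> e; rewrite /plusv /indic; case: (e \in T); have := Hy e => H.
      apply: Rmin_glb; nra.
    by rewrite Rmult_0_r Rplus_0_r Rmin_left; lra.
  by move=> e; rewrite in_setT.
have M2 := G_concave Hm Hs He (leqnn #|T|) Hy.
have M3 : f T <= G f (topv y T).
  rewrite -[f T](G_indic f T).
  apply: (@G_mono _ f (@monoG f Hm) #|[set: N]| [set: N]) => //.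
  - by move=> e; rewrite /indic'; case: (e \in T); lra.
  - by move=> e; rewrite /topv; case: (e \in T); have := Hy e; lra.
  - by move=> e; rewrite /indic' /topv; case: (e \in T); have := Hy e; lra.
  - by move=> e; rewrite in_setT.
have : eps * f T <= eps * G f (topv y T) by apply: Rmult_le_compat_l; lra.
lra.
Qed.

Lemma sum_const_ord (l : nat) (c : R) : \rsum_(j < l) c = INR l * c.
Proof.
elim: l => [|l IH]; first by rewrite big_ord0 /=; ring.
by rewrite S_INR big_ord_recr IH /=; ring.
Qed.

Section Proc.
Variable l : nat.
Implicit Type s : {ffun 'I_l -> {set N}}.

Lemma xs_bounds s (i : nat) e : (0 < l)%N -> 0 <= xs s i e <= 1.
Proof.
move=> Hl; have Hl0 : 0 < INR l by apply: lt_0_INR; apply/ltP.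
have Hi : 0 <= / INR l by apply: Rlt_le; apply: Rinv_0_lt_compat.
rewrite /xs big_mkcond; split.
  apply: sum_ge0 => j; case: (j < i)%N; last lra.
  by apply: Rmult_le_pos => //; rewrite /indic; case: (e \in s j); lra.
apply: (Rle_trans _ (\rsum_(j < l) / INR l)).
  apply: sum_le => j; case: (j < i)%N; last lra.
  by rewrite /indic; case: (e \in s j); lra.
by rewrite sum_const_ord Rinv_r; lra.
Qed.

Lemma xs_succ s (j : 'I_l) e :
  xs s j.+1 e = xs s j e + / INR l * indic (s j) e.
Proof.
rewrite /xs (bigD1 j) //= Rplus_comm; congr (_ + _).
apply: eq_bigl => k; rewrite ltnS leq_eqVlt.
by rewrite -val_eqE /=; case: ltngtP.
Qed.

Lemma xs_0 s e : xs s 0 e = 0.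
Proof. by rewrite /xs big_pred0. Qed.

Lemma xs_l s e : xs s l e = \rsum_(j < l) (/ INR l * indic (s j) e).
Proof. by rewrite /xs; apply: eq_bigl => j; rewrite ltn_ord. Qed.

Variable p : {ffun 'I_l -> {set N}} -> R.
Hypothesis p0 : forall s, 0 <= p s.
Hypothesis p1 : expect p (fun _ => 1) = 1.

Lemma E_le (X Y : {ffun 'I_l -> {set N}} -> R) :
  (forall s, X s <= Y s) -> expect p X <= expect p Y.
Proof.
move=> H; apply: sum_le => s; apply: Rmult_le_compat_l => //; exact: H.
Qed.

Lemma E_add (X Y : {ffun 'I_l -> {set N}} -> R) :
  expect p (fun s => X s + Y s) = expect p X + expect p Y.
Proof. by rewrite /expect -sum_split; apply: eq_bigr => s _; ring. Qed.

Lemma E_scale c (X : {ffun 'I_l -> {set N}} -> R) :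
  expect p (fun s => c * X s) = c * expect p X.
Proof. by rewrite /expect -sum_scale; apply: eq_bigr => s _; ring. Qed.

Lemma E_const c : expect p (fun _ => c) = c.
Proof.
rewrite -{2}(Rmult_1_r c) -p1 -E_scale; apply: eq_bigr => s _; ring.
Qed.

Lemma trunc_sum (j : nat) (body : {ffun 'I_l -> {set N}} -> R) :
  (forall h : {ffun 'I_l -> {set N}},
     0 <= expect p (fun s => if [forall k : 'I_l, (k < j)%N ==> (s k == h k)]
                             then body s else 0)) ->
  0 <= expect p body.
Proof.
move=> H.
pose w (h : {ffun 'I_l -> {set N}}) := [forall k : 'I_l, (j <= k)%N ==> (h k == set0)].
pose tr s : {ffun 'I_l -> {set N}} := [ffun k : 'I_l => if (k < j)%N then s k else set0].
have E : expect p body = \big[Rplus/R0]_(h | w h) expect p (fun s =>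
    if [forall k : 'I_l, (k < j)%N ==> (s k == h k)] then body s else 0).
  rewrite /expect exchange_big /=; apply: eq_bigr => s _.
  rewrite (bigD1 (tr s)) /=; last first.
    apply/forallP => k; apply/implyP => Hk; rewrite ffunE.
    by rewrite ltnNge Hk.
  rewrite big1 ?Rplus_0_r.
    suff -> : [forall k : 'I_l, (k < j)%N ==> (s k == tr s k)] by [].
    by apply/forallP => k; apply/implyP => Hk; rewrite ffunE Hk.
  move=> h /andP [Hw Hne].
  case: ifP => Hc; last by ring.
  case/eqP: Hne; apply/ffunP => k; rewrite ffunE.
  case: ifP => Hk.
    by move/forallP: Hc => /(_ k) /implyP /(_ Hk) /eqP.
  by move/forallP: Hw => /(_ k) /implyP; rewrite leqNgt Hk => /(_ isT) /eqP.
rewrite E; apply: (big_ind (fun x => 0 <= x)); [lra| move=> *; lra|].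
by move=> h _; apply: H.
Qed.

End Proc.
End Main.


Lemma E_lin3 (N : finType) l (p : {ffun 'I_l -> {set N}} -> R) c1 c2 c3 X Y :
  expect p (fun _ => 1) = 1 ->
  expect p (fun s => c1 * X s + c2 * Y s + c3) =
  c1 * expect p X + c2 * expect p Y + c3.
Proof.
move=> p1.
by rewrite (E_add p (fun s => c1 * X s + c2 * Y s)) E_add !E_scale E_const.
Qed.

Unset Implicit Arguments.
Set Strict Implicit.

Theorem mainTheorem12
  (N : finType) (I : {set {set N}}) (f : {set N} -> R)
  (alpha : R) (l : nat) (T : {set N})
  (p : {ffun 'I_l -> {set N}} -> R) :
  nonneg_setfun f -> normalized f -> monotone f -> submodular f ->
  0 < alpha <= 1 -> (0 < l)%N -> T \in I ->
  (forall s, 0 <= p s) -> expect p (fun _ => 1) = 1 ->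
  (forall s, 0 < p s -> forall j, s j \in I) ->
  (forall (j : 'I_l) (h : {ffun 'I_l -> {set N}}),
     expect p (fun s =>
       if [forall k : 'I_l, (k < j)%N ==> (s k == h k)] then
         let F := multilinear f in
         let x := xs s j in
         let g1 := F (fun e => x e + / INR l * indic (s j) e) - F x in
         let g2 := F (fun e => x e + / INR l * (indic (s j) e + indic T e)) - F x in
         g1 - alpha * (g2 - g1)
       else 0) >= 0) ->
  (forall s, 0 < p s ->
     exists (B : 'I_l -> {set N}) (lam : 'I_l -> R),
       (forall j, B j \in I) /\ (forall j, 0 <= lam j) /\
       \rsum_(j < l) lam j = 1 /\
       (forall e, xs s l e = \rsum_(j < l) (lam j * indic (B j) e))) /\
  expect p (fun s => multilinear f (xs s l))
    >= (1 - / (1 + alpha / INR l) ^ l) * f T /\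
  (1 - / (1 + alpha / INR l) ^ l) * f T
    >= (1 - 2 / INR l) * (1 - exp (- alpha)) * f T /\
  (forall eps, 0 < eps -> INR l >= 2 / eps ->
     expect p (fun s => multilinear f (xs s l))
       >= (1 - eps) * (1 - exp (- alpha)) * f T).
Proof.
move=> Hnn Hnorm Hmono Hsub Ha Hl HT Hp0 Hp1 HI Hstep.
have Hl0 : 0 < INR l by apply: lt_0_INR; apply/ltP.
have Hl1 : 1 <= INR l by change 1 with (INR 1); apply: le_INR; apply/leP.
set eps := / INR l.
have He : 0 <= eps <= 1.
  split; first by apply: Rlt_le; apply: Rinv_0_lt_compat.
  by rewrite /eps -Rinv_1; apply: Rinv_le_contravar; lra.
have Hepsl : INR l * eps = 1 by rewrite /eps Rinv_r; lra.
have HfT := Hnn T.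
set a := fun i : nat => expect p (fun s => multilinear f (xs s i)).
have Hrec : forall j : 'I_l, alpha * eps * (f T - a j.+1) <= a j.+1 - a j.
  move=> j.
  have H0 : 0 <= expect p (fun s =>
     (multilinear f (fun e => xs s j e + eps * indic (s j) e) - multilinear f (xs s j))
     - alpha * ((multilinear f (fun e => xs s j e + eps * (indic (s j) e + indic T e))
                 - multilinear f (xs s j))
               - (multilinear f (fun e => xs s j e + eps * indic (s j) e)
                 - multilinear f (xs s j)))).
    apply: (@trunc_sum _ _ p j) => h.
    by apply: Rge_le; exact: (Hstep j h).
  have H1 := @E_lin3 N l p (1 + alpha * eps) (-1) (- (alpha * eps * f T))
                    (fun s => multilinear f (xs s j.+1)) (fun s => multilinear f (xs s j)) Hp1.
  have H2 : expect p (fun s =>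
     (multilinear f (fun e => xs s j e + eps * indic (s j) e) - multilinear f (xs s j))
     - alpha * ((multilinear f (fun e => xs s j e + eps * (indic (s j) e + indic T e))
                 - multilinear f (xs s j))
               - (multilinear f (fun e => xs s j e + eps * indic (s j) e)
                 - multilinear f (xs s j)))) <=
     expect p (fun s => (1 + alpha * eps) * multilinear f (xs s j.+1)
                        + -1 * multilinear f (xs s j) + - (alpha * eps * f T)).
    apply: E_le => // s.
    rewrite (multilinear_ext f (x := fun e => xs s j e + eps * indic (s j) e)
                               (y := xs s j.+1)); last by move=> e; rewrite xs_succ.
    rewrite (multilinear_ext f (x := fun e => xs s j e + eps * (indic (s j) e + indic T e))
                       (y := fun e => xs s j.+1 e + eps * indic T e)); last first.
      by move=> e; rewrite xs_succ; rewrite /eps; ring.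
    have Hy : unit01 (xs s j.+1) by move=> e; apply: xs_bounds.
    have := step_ineq T Hmono Hsub Hy He.
    move=> K.
    have : alpha * (eps * (f T - multilinear f (xs s j.+1))) <=
           alpha * (multilinear f (fun e => xs s j.+1 e + eps * indic T e)
                    - multilinear f (xs s j.+1)).
      apply: Rmult_le_compat_l; lra.
    lra.
  rewrite H1 in H2; rewrite /a; lra.
set qq := 1 + alpha * eps.
have Hq : 1 <= qq.
  have : 0 <= alpha * eps by apply: Rmult_le_pos; lra.
  rewrite /qq; lra.
have Ha0 : a 0%N = 0.
  transitivity (expect p (fun _ => 0)); last exact: E_const.
  apply: eq_bigr => s _; congr (_ * _).
  rewrite multilinearE -Hnorm -(G_indic f set0); apply: G_ext => e.
  by rewrite xs_0 /indic' in_set0 Rmin_left; lra.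
have Hd : forall k, (k <= l)%N -> f T - a k <= f T * / qq ^ k.
  elim=> [|k IH] Hk.
    by rewrite Ha0 /= Rinv_1; lra.
  have Hkl : (k < l)%N by [].
  have := Hrec (Ordinal Hkl); rewrite /= => Hr.
  have IH' := IH (ltnW Hkl).
  have Hqk : 0 < qq ^ k by apply: pow_lt; lra.
  have Hd1 : qq * (f T - a k.+1) <= f T * / qq ^ k.
    have : qq * (f T - a k.+1) = (f T - a k.+1) + alpha * eps * (f T - a k.+1)
      by rewrite /qq; ring.
    lra.
  apply: (Rmult_le_reg_l qq); first lra.
  have -> : qq * (f T * / qq ^ k.+1) = f T * / qq ^ k.
    change (qq ^ k.+1) with (qq * qq ^ k); field; lra.
  exact: Hd1.
have Hmain : (1 - / (1 + alpha / INR l) ^ l) * f T <= expect p (fun s => multilinear f (xs s l)).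
  have := Hd l (leqnn l); rewrite /a /qq /eps /Rdiv; lra.
have Han := @anal alpha l Ha Hl.
have HE1 : exp (- alpha) <= 1.
  have := exp_increasing (- alpha) 0; rewrite exp_0; lra.
have Hsecond : (1 - 2 / INR l) * (1 - exp (- alpha)) * f T <= (1 - / (1 + alpha / INR l) ^ l) * f T.
  by apply: Rmult_le_compat_r.
have Eqq : qq = 1 + alpha / INR l by [].
rewrite Eqq.
split.
  move=> s Hs; exists (fun j => s j), (fun _ => eps); split; first by move=> j; apply: HI.
  split; first by move=> _; lra.
  split; first by rewrite sum_const_ord.
  by move=> e; rewrite xs_l.
split; first lra.
split; first lra.
move=> e' He' Hle.
have H2 : 2 / INR l <= e'.
  apply: (Rmult_le_reg_l (INR l)) => //.
  have -> : INR l * (2 / INR l) = 2 by field; lra.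
  have : 2 / e' * e' = 2 by field; lra.
  have := Rmult_le_compat_r e' _ _ (Rlt_le _ _ He') (Rge_le _ _ Hle).
  lra.
have : 0 <= (1 - exp (- alpha)) * f T by apply: Rmult_le_pos; lra.
move=> K.
have : (1 - e') * ((1 - exp (- alpha)) * f T) <= (1 - 2 / INR l) * ((1 - exp (- alpha)) * f T).
  by apply: Rmult_le_compat_r; lra.
rewrite !Rmult_assoc in Hsecond *.
lra.
Qed.
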